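(* Let $\mathbb{R}_1=\{x\in\mathbb{R}: x\ge 1\}$, $\mathbb{N}_1=\{1,2,3,\dots\}$, and let $U:\mathbb{R}_1\to\mathbb{R}_1$ be defined by \[ U(x)=\begin{cases} \dfrac{x}{2} & \text{if } \lfloor x\rfloor \text{ is even},\\[4pt] \dfrac{3x+1}{2} & \text{if } \lfloor x\rfloor \text{ is odd}.\end{cases}\] If $x\in\mathbb{R}_1$ and $k\in\mathbb{N}_1$ satisfy $U^k(x)=x$, then $x\in\mathbb{N}_1$. Equivalently, the only $U$-cycles are the $T$-cycles, where $T=U|_{\mathbb{N}_1}$ is the integer $3n+1$ function $T(n)=n/2$ for even $n$, $T(n)=(3n+1)/2$ for odd $n$.
   Context: $\lfloor x\rfloor$ denotes the largest integer $\le x$. For a function $f:X\to X$, $f^0$ is the identity and $f^i=f\circ f^{i-1}$. An $f$-cycle is the trajectory $(f^i(z))_{i\ge 0}$ of a point $z$ with $f^n(z)=z$ for some $n\ge 1$. Note that $U$ restricted to $\mathbb{N}_1$ coincides with $T$. *)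

(* Defs.v *)
From Stdlib Require Import Reals ZArith.
Open Scope R_scope.

(* floor x = Int_part x (= up x - 1), the largest integer <= x. *)
Definition U (x : R) : R :=
  if Z.even (Int_part x) then x / 2 else (3 * x + 1) / 2.

Fixpoint iter_R (k : nat) (f : R -> R) (x : R) : R :=
  match k with O => x | S k' => f (iter_R k' f x) end.

(* Main.v *)
Require Import Defs.
From Stdlib Require Import Reals ZArith Lra Lia.
Open Scope R_scope.

Definition fr (y : R) : R := y - IZR (Int_part y).

Lemma fr_bounds y : 0 <= fr y < 1.
Proof. unfold fr; destruct (base_Int_part y); lra. Qed.

Lemma fr_le y (w : Z) : IZR w <= y -> fr y <= y - IZR w.
Proof.
  intro H. unfold fr. destruct (base_Int_part y) as [H1 H2].
  assert (w < Int_part y + 1)%Z.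
  { apply lt_IZR. rewrite plus_IZR. simpl. lra. }
  assert (IZR w <= IZR (Int_part y)) by (apply IZR_le; lia). lra.
Qed.


Lemma step1 y0 y : 1 <= y0 -> 0 < fr y0 ->
  fr y * y0 <= fr y0 * y ->
  fr (U y) * y0 <= fr y0 * U y /\
  (fr y * y0 < fr y0 * y -> fr (U y) * y0 < fr y0 * U y) /\
  (Z.even (Int_part y) = false -> fr (U y) * y0 < fr y0 * U y).
Proof.
  intros Hy0 Hf0 Hinv.
  pose proof (fr_bounds y) as [Hf1 Hf2].
  pose proof (fr_bounds (U y)) as [Hg1 Hg2].
  unfold U. destruct (Z.even (Int_part y)) eqn:E.
  - apply Z.even_spec in E. destruct E as [q Hq].
    assert (Hle : fr (y/2) <= fr y / 2).
    { assert (IZR q <= y / 2).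
      { destruct (base_Int_part y). rewrite Hq, mult_IZR in H. simpl in H. lra. }
      pose proof (fr_le (y/2) q H). unfold fr at 2. rewrite Hq, mult_IZR. simpl. lra. }
    repeat split; intros; try discriminate; nra.
  - assert (Ho : Z.odd (Int_part y) = true) by (rewrite <- Z.negb_even, E; reflexivity).
    apply Z.odd_spec in Ho. destruct Ho as [q Hq].
    assert (Hle : fr ((3*y+1)/2) <= 3 * fr y / 2).
    { assert (IZR (3*q+2) <= (3*y+1)/2).
      { destruct (base_Int_part y). rewrite Hq, plus_IZR, mult_IZR in H.
        rewrite plus_IZR, mult_IZR. simpl in *. lra. }
      pose proof (fr_le _ _ H). unfold fr at 2. rewrite Hq.
      rewrite !plus_IZR, !mult_IZR in *. simpl in *. lra. }
    repeat split; intros; nra.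
Qed.

Lemma inv x : 1 <= x -> 0 < fr x -> forall i,
  fr (iter_R i U x) * x <= fr x * iter_R i U x /\
  (fr (iter_R i U x) * x < fr x * iter_R i U x \/ iter_R i U x * 2 ^ i = x).
Proof.
  intros Hx Hf. induction i as [|i [IH1 IH2]].
  - simpl. split; [lra|]. right; lra.
  - simpl. destruct (step1 x (iter_R i U x) Hx Hf IH1) as [A [B C]].
    split; [exact A|].
    destruct IH2 as [H|H]; [left; auto|].
    destruct (Z.even (Int_part (iter_R i U x))) eqn:E.
    + right. unfold U at 1. rewrite E. rewrite <- H at 2. field.
    + left; auto.
Qed.

Theorem theorem1 (x : R) (k : nat) :
  1 <= x -> (1 <= k)%nat -> iter_R k U x = x ->
  exists n : nat, (1 <= n)%nat /\ x = INR n.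
Proof.
  intros Hx Hk Hc.
  pose proof (fr_bounds x) as [F1 F2].
  destruct (Rle_lt_or_eq_dec 0 (fr x) F1) as [Hpos|Hz].
  - exfalso. destruct (inv x Hx Hpos k) as [_ [H|H]]; rewrite Hc in H; [lra|].
    assert (2 <= 2 ^ k).
    { destruct k as [|k]; [lia|]. simpl. pose proof (pow_R1_Rle 2 k ltac:(lra)). lra. }
    nra.
  - unfold fr in Hz. destruct (base_Int_part x) as [B1 B2].
    assert (Hge : (1 <= Int_part x)%Z).
    { apply le_IZR. simpl. lra. }
    exists (Z.to_nat (Int_part x)). split; [lia|].
    rewrite INR_IZR_INZ, Z2Nat.id by lia. lra.
Qed.
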